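(* Let $p,g_i,S,d,R,\eta_i,\beta,f_\gamma,N,D,p^*$ be as in the context. Suppose that for all positive integers $n',d'$ and all integers $r\ge 0$ we are given a set $K^r_{n',2d'}$ of forms of degree $2d'$ in $n'$ variables such that: (a) $K^r_{n',2d'}\subseteq P_{n',2d'}$ for all $r$, and there exists a positive definite form $s_{n',2d'}\in K^0_{n',2d'}$; (b) if a form $q$ of degree $2d'$ in $n'$ variables is positive definite, then there exists $r\in\mathbb{N}$ with $q\in K^r_{n',2d'}$; (c) $K^r_{n',2d'}\subseteq K^{r+1}_{n',2d'}$ for all $r$; (d) if $q\in K^r_{n',2d'}$, then $q+\epsilon\, s_{n',2d'}\in K^r_{n',2d'}$ for all $\epsilon\in[0,1]$. For each positive integer $r$ let $$l_r=\sup\Big\{\gamma\in\mathbb{R} : f_\gamma(z)-\tfrac{1}{r}s_{N,2D}(z)\in K^r_{N,2D}\Big\}$$ (with $\sup\emptyset=-\infty$). Then $l_r\le p^*$ for all $r$, the sequence $\{l_r\}$ is nondecreasing, and $\lim_{r\to\infty}l_r=p^*$.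
   Context: Let $p,g_1,\dots,g_m$ be real polynomials in $x=(x_1,\dots,x_n)$ and let $S=\{x\in\mathbb{R}^n : g_i(x)\ge 0,\ i=1,\dots,m\}$. Let $p^*=\inf_{x\in S}p(x)$ (with $p^*=+\infty$ if $S=\emptyset$). Let $d\ge 1$ be the integer such that $2d$ is the smallest even integer larger than or equal to the maximum of the degrees of $p,g_1,\dots,g_m$. Assume there is $R>0$ with $\sum_{i=1}^n x_i^2\le R$ for all $x\in S$. Let $\eta_1,\dots,\eta_m$ be real numbers with $g_i(x)\le\eta_i$ for all $x\in S$, and let $\beta$ be a real number with $-p(x)\le\beta$ for all $x\in S$. For a polynomial $q$ in $x$ of degree at most $2d$, $y^{2d}q(x/y)$ denotes its homogenization to a form of degree $2d$ in $(x,y)$. For $\gamma\in\mathbb{R}$ define the form in the variables $z=(x,s,y)=(x_1,\dots,x_n,s_0,\dots,s_{m+1},y)$: $$f_\gamma(x,s,y)=\big(\gamma y^{2d}-y^{2d}p(x/y)-s_0^2y^{2d-2}\big)^2+\sum_{i=1}^m\big(y^{2d}g_i(x/y)-s_i^2y^{2d-2}\big)^2+\Big(\big(R+\textstyle\sum_{i=1}^m\eta_i+\beta+\gamma\big)^d y^{2d}-\big(\sum_{i=1}^n x_i^2+\sum_{i=0}^m s_i^2\big)^d-s_{m+1}^{2d}\Big)^2.$$ Set $N=n+m+3$ and $D=2d$, so $f_\gamma$ is a form of degree $2D$ in $N$ variables. $P_{n',2d'}$ denotes the set of nonnegative forms (forms $q$ with $q(x)\ge0$ for all $x$) of degree $2d'$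 in $n'$ variables; a form is positive definite if it is positive at every nonzero point. *)

(* Defs.v *)
From Stdlib Require Import Reals List Arith.
Open Scope R_scope.

(* Points of R^n are functions nat -> R; only coordinates 0..n-1 matter. *)

(* A monomial exponent vector: the exponent of variable i is the i-th entry
   (missing entries are 0).  mono_eval e x = prod_i x_i ^ e_i. *)
Fixpoint mono_eval (e : list nat) (x : nat -> R) : R :=
  match e with
  | nil => 1
  | k :: e' => x O ^ k * mono_eval e' (fun i => x (S i))
  end.

Definition mpoly := list (R * list nat).

Definition peval (p : mpoly) (x : nat -> R) : R :=
  fold_right (fun mo acc => fst mo * mono_eval (snd mo) x + acc) 0 p.

Definition mdeg (e : list nat) : nat := fold_right Nat.add O e.

Definition vars_le (p : mpoly) (n : nat) : Prop :=
  forall mo, In mo p -> (length (snd mo) <= n)%nat.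

Definition syn_deg_le (p : mpoly) (k : nat) : Prop :=
  forall mo, In mo p -> (mdeg (snd mo) <= k)%nat.

(* the polynomial (function) p has degree <= k (representation-independent) *)
Definition deg_le (p : mpoly) (k : nat) : Prop :=
  exists q : mpoly, syn_deg_le q k /\ forall x, peval q x = peval p x.

(* Homogenization y^k p(x/y) of a representation all of whose monomials have
   degree <= k. *)
Definition homog (k : nat) (p : mpoly) (x : nat -> R) (y : R) : R :=
  fold_right (fun mo acc => fst mo * mono_eval (snd mo) x * y ^ (k - mdeg (snd mo)) + acc) 0 p.

Fixpoint sumR (n : nat) (f : nat -> R) : R :=
  match n with
  | O => 0
  | S n' => sumR n' f + f n'
  end.

Definition is_form (n k : nat) (f : (nat -> R) -> R) : Prop :=
  exists q : mpoly, vars_le q n /\ (forall mo, In mo q -> mdeg (snd mo) = k)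
                    /\ forall x, f x = peval q x.

Definition nonneg_fun (f : (nat -> R) -> R) : Prop := forall x, 0 <= f x.

Definition pos_def (n : nat) (f : (nat -> R) -> R) : Prop :=
  forall x, (exists i, (i < n)%nat /\ x i <> 0) -> 0 < f x.

Definition inS (m : nat) (g : nat -> mpoly) (x : nat -> R) : Prop :=
  forall i, (1 <= i <= m)%nat -> 0 <= peval (g i) x.

Inductive ER := ERfin (x : R) | ERpinf | ERninf.

Definition ERle (a b : ER) : Prop :=
  match a, b with
  | ERninf, _ => True
  | _, ERpinf => True
  | ERfin x, ERfin y => x <= y
  | _, _ => False
  end.

(* l is the supremum (in the extended reals) of the set A; sup of empty = -oo *)
Definition ER_is_sup (A : R -> Prop) (l : ER) : Prop :=
  (forall x, A x -> ERle (ERfin x) l) /\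
  (forall u, (forall x, A x -> ERle (ERfin x) u) -> ERle l u).

(* l is the infimum of A; inf of empty = +oo *)
Definition ER_is_inf (A : R -> Prop) (l : ER) : Prop :=
  (forall x, A x -> ERle l (ERfin x)) /\
  (forall u, (forall x, A x -> ERle u (ERfin x)) -> ERle u l).

Definition ER_limit (u : nat -> ER) (L : ER) : Prop :=
  match L with
  | ERfin a => forall eps, 0 < eps -> exists N, forall k, (N <= k)%nat ->
                 exists v, u k = ERfin v /\ Rabs (v - a) < eps
  | ERpinf => forall M, exists N, forall k, (N <= k)%nat -> ERle (ERfin M) (u k)
  | ERninf => forall M, exists N, forall k, (N <= k)%nat -> ERle (u k) (ERfin M)
  end.

(* The form f_gamma in the N = n+m+3 variables z = (x_0..x_{n-1}, s_0..s_{m+1}, y):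
   x_i = z i, s_j = z (n+j), y = z (n+m+2).  The g_i and eta_i are indexed 1..m. *)
Definition f_gamma (n m d : nat) (p : mpoly) (g : nat -> mpoly) (Rb : R)
    (eta : nat -> R) (beta gamma : R) (z : nat -> R) : R :=
  let y := z (n + m + 2)%nat in
  let sv := fun j => z (n + j)%nat in
  (gamma * y ^ (2 * d) - homog (2 * d) p z y - sv O ^ 2 * y ^ (2 * d - 2)) ^ 2
  + sumR m (fun i => (homog (2 * d) (g (S i)) z y - sv (S i) ^ 2 * y ^ (2 * d - 2)) ^ 2)
  + ((Rb + sumR m (fun i => eta (S i)) + beta + gamma) ^ d * y ^ (2 * d)
     - (sumR n (fun i => z i ^ 2) + sumR (m + 1) (fun j => sv j ^ 2)) ^ d
     - sv (S m) ^ (2 * d)) ^ 2.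

(* Main.v *)
Require Import Defs.
From Stdlib Require Import Reals List Arith Lia Lra FunctionalExtensionality Classical.
Open Scope R_scope.

Lemma sumR_nonneg n f : (forall i, (i < n)%nat -> 0 <= f i) -> 0 <= sumR n f.
Proof.
induction n; intros H; simpl. lra.
assert (0 <= sumR n f) by (apply IHn; intros; apply H; lia).
assert (0 <= f n) by (apply H; lia). lra.
Qed.

Lemma sumR_ge_term n f i : (forall j, (j < n)%nat -> 0 <= f j) -> (i < n)%nat -> f i <= sumR n f.
Proof.
induction n; intros H Hi; simpl. lia.
destruct (Nat.eq_dec i n) as [->|Hne].
- assert (0 <= sumR n f) by (apply sumR_nonneg; intros; apply H; lia). lra.
- assert (f i <= sumR n f) by (apply IHn; [intros; apply H; lia| lia]).
  assert (0 <= f n) by (apply H; lia). lra.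
Qed.

Lemma sumR_le n f g : (forall i, (i < n)%nat -> f i <= g i) -> sumR n f <= sumR n g.
Proof.
induction n; intros H; simpl. lra.
assert (sumR n f <= sumR n g) by (apply IHn; intros; apply H; lia).
assert (f n <= g n) by (apply H; lia). lra.
Qed.

Lemma sumR_ext n f g : (forall i, (i < n)%nat -> f i = g i) -> sumR n f = sumR n g.
Proof.
induction n; intros H; simpl. reflexivity.
rewrite IHn by (intros; apply H; lia). rewrite H by lia. reflexivity.
Qed.

Lemma sumR_zero n f : (forall i, (i < n)%nat -> 0 <= f i) -> sumR n f = 0 ->
  forall i, (i < n)%nat -> f i = 0.
Proof.
intros H H0 i Hi. pose proof (sumR_ge_term n f i H Hi). pose proof (H i Hi). lra.
Qed.

Definition e0 (i : nat) : R := if Nat.eqb i 0 then 1 else 0.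

Lemma sumR_e0 n : (1 <= n)%nat -> sumR n (fun i => e0 i ^ 2) = 1.
Proof.
induction n; intros H. lia.
cbn [sumR]. destruct n. simpl. unfold e0. simpl. lra.
rewrite IHn by lia. unfold e0. simpl. lra.
Qed.

Module Cpt.
From mathcomp Require Import all_boot all_order all_algebra.
From mathcomp Require Import all_classical all_reals all_analysis.
From mathcomp Require Import Rstruct Rstruct_topology.
Import numFieldNormedType.Exports.
Local Open Scope classical_set_scope.

Definition PT := prod_topology (fun _ : nat => R).

Lemma cont_proj (j : nat) : continuous (fun x : PT => x j).
Proof. exact: (@proj_continuous nat (fun _ => R) j). Qed.

Lemma cont_cst (c : R) : continuous (fun _ : PT => c).
Proof. move=> x; exact: cst_continuous. Qed.

Lemma cont_mul (f g : PT -> R) : continuous f -> continuous g ->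
  continuous (fun z => Rmult (f z) (g z)).
Proof. move=> hf hg x; exact: (continuousM (hf x) (hg x)). Qed.

Lemma cont_add (f g : PT -> R) : continuous f -> continuous g ->
  continuous (fun z => Rplus (f z) (g z)).
Proof. move=> hf hg x; have := @continuousD R R^o PT f g x (hf x) (hg x); exact. Qed.

Lemma cont_opp (f : PT -> R) : continuous f -> continuous (fun z => Ropp (f z)).
Proof. move=> hf x; have := @continuousN R R^o PT f x (hf x); exact. Qed.

Lemma cont_pow (f : PT -> R) k : continuous f -> continuous (fun z => pow (f z) k).
Proof.
move=> hf; elim: k => [|k IH] /=; first exact: cont_cst.
exact: cont_mul.
Qed.

Lemma cont_mono_shift (e : list nat) : forall j : nat,
  continuous (fun x : PT => mono_eval e (fun i => x (j + i)%nat)).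
Proof.
elim: e => [|k e IH] j /=; first exact: cont_cst.
apply: cont_mul; first by apply: cont_pow; exact: cont_proj.
have -> : (fun x : PT => mono_eval e (fun i => x (j + S i)%nat)) =
          (fun x : PT => mono_eval e (fun i => x (S j + i)%nat)).
  apply: funext => x; congr mono_eval; apply: funext => i; by rewrite addnS.
exact: IH.
Qed.

Lemma cont_mono (e : list nat) : continuous (fun x : PT => mono_eval e x).
Proof. exact: (cont_mono_shift e 0). Qed.

Lemma cont_peval (q : mpoly) : continuous (fun x : PT => peval q x).
Proof.
elim: q => [|mo q IH] /=; first exact: cont_cst.
rewrite /peval /=.
apply: cont_add => //; apply: cont_mul; [exact: cont_cst| exact: cont_mono].
Qed.

Lemma cont_sumsq (N : nat) : continuous (fun x : PT => sumR N (fun i => pow (x i) 2)).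
Proof.
elim: N => [|N IH]; first exact: cont_cst.
exact: (cont_add _ _ IH (cont_pow _ 2 (cont_proj N))).
Qed.

Lemma sphere_min_gen (N : nat) (F : PT -> R) : lt 0 N -> continuous F ->
  exists z0 : nat -> R, sumR N (fun i => pow (z0 i) 2) = 1 /\
    (forall i, le N i -> z0 i = 0) /\
    forall z : nat -> R, sumR N (fun i => pow (z i) 2) = 1 ->
      (forall i, le N i -> z i = 0) -> Rle (F z0) (F z).
Proof.
move=> N0 cF.
pose A : nat -> set R := fun i => if Nat.ltb i N then `[(-1)%R, 1%R]%classic else [set 0%R]%classic.
have cA : compact [set f : PT | forall i, A i (f i)].
  apply: (@tychonoff nat (fun _ => R) A) => i; rewrite /A.
  case: (Nat.ltb i N); [exact: segment_compact | exact: compact_set1].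
have cl : closed [set z : PT | sumR N (fun i => pow (z i) 2) = 1].
  apply: (@preimage_closed PT R (fun x : PT => sumR N (fun i => pow (x i) 2)) [set x | x = 1]).
    by move=> x _; exact: cont_sumsq.
  exact: closed_eq.
have cC := compact_closedI cA cl.
have inC : forall z : nat -> R, sumR N (fun i => pow (z i) 2) = 1 ->
      (forall i, le N i -> z i = 0) ->
      ([set f : PT | forall i, A i (f i)] `&` [set z : PT | sumR N (fun i => pow (z i) 2) = 1]) z.
  move=> z Hs Hz; split => // i; rewrite /A.
  case E: (Nat.ltb i N).
  - move/Nat.ltb_lt: E => E.
    have H1 : Rle (pow (z i) 2) 1.
      rewrite -Hs; apply: (sumR_ge_term N (fun i => pow (z i) 2) i) => // j _.
      exact: pow2_ge_0.
    have H2 : Rle (-1) (z i) /\ Rle (z i) 1 by split; nra.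
    rewrite /= in_itv /=; apply/andP; split; apply/RleP; tauto.
  - move/Nat.ltb_ge: E => E; exact: Hz.
have ne : ([set f : PT | forall i, A i (f i)] `&` [set z : PT | sumR N (fun i => pow (z i) 2) = 1]) !=set0.
  exists e0; apply: inC; first by apply: sumR_e0; lia.
  move=> i Hi; rewrite /e0; have -> : Nat.eqb i 0 = false by apply/Nat.eqb_neq; lia.
  by [].
have [c cC' Hc] := compact_EVT_min ne cC (@continuous_subspaceT PT R _ F cF).
move: cC' => /set_mem [cA' cs].
exists c; split => //; split.
  move=> i Hi; have := cA' i; rewrite /A.
  have -> : Nat.ltb i N = false by apply/Nat.ltb_ge.
  by [].
move=> z Hs Hz; apply/RleP; apply: Hc; apply/mem_set; exact: inC.
Qed.

Lemma sphere_min (N : nat) (q : mpoly) : lt 0 N ->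
  exists z0 : nat -> R, sumR N (fun i => pow (z0 i) 2) = 1 /\
    (forall i, le N i -> z0 i = 0) /\
    forall z : nat -> R, sumR N (fun i => pow (z i) 2) = 1 ->
      (forall i, le N i -> z i = 0) -> Rle (peval q z0) (peval q z).
Proof. move=> N0; exact: (sphere_min_gen N (fun x : PT => peval q x) N0 (cont_peval q)). Qed.

Lemma sphere_max (N : nat) (q : mpoly) : lt 0 N ->
  exists z0 : nat -> R, sumR N (fun i => pow (z0 i) 2) = 1 /\
    (forall i, le N i -> z0 i = 0) /\
    forall z : nat -> R, sumR N (fun i => pow (z i) 2) = 1 ->
      (forall i, le N i -> z i = 0) -> Rle (peval q z) (peval q z0).
Proof.
move=> N0.
have [z0 [H1 [H2 H3]]] := sphere_min_gen N (fun x : PT => Ropp (peval q x)) N0 (cont_opp _ (cont_peval q)).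
exists z0; split => //; split => // z Hs Hz; have := H3 z Hs Hz; lra.
Qed.
End Cpt.

Lemma mono_eval_ext e : forall x z, (forall i, (i < length e)%nat -> x i = z i) ->
  mono_eval e x = mono_eval e z.
Proof.
induction e as [|k e IH]; intros x z H; simpl. reflexivity.
rewrite (H 0%nat) by (simpl; lia).
f_equal. apply IH. intros i Hi. apply H. simpl. lia.
Qed.

Lemma peval_ext_vars q n x z : vars_le q n -> (forall i, (i < n)%nat -> x i = z i) ->
  peval q x = peval q z.
Proof.
induction q as [|mo q IH]; intros Hv H; unfold peval; simpl. reflexivity.
fold (peval q x). fold (peval q z).
rewrite IH. rewrite (mono_eval_ext (snd mo) x z). reflexivity.
intros i Hi. apply H. specialize (Hv mo (or_introl eq_refl)). lia.
intros mo' Hmo'. apply Hv. right. exact Hmo'.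
exact H.
Qed.

Lemma mono_eval_scale e : forall x t, mono_eval e (fun i => x i * t) = t ^ mdeg e * mono_eval e x.
Proof.
induction e as [|k e IH]; intros x t; simpl. ring.
rewrite (IH (fun i => x (S i)) t). rewrite pow_add. rewrite Rpow_mult_distr. ring.
Qed.

Lemma peval_scale q k x t : (forall mo, In mo q -> mdeg (snd mo) = k) ->
  peval q (fun i => x i * t) = t ^ k * peval q x.
Proof.
induction q as [|mo q IH]; intros H; unfold peval; simpl. ring.
fold (peval q x). fold (peval q (fun i => x i * t)).
rewrite IH by (intros; apply H; right; auto).
rewrite mono_eval_scale. rewrite (H mo (or_introl eq_refl)). ring.
Qed.

Lemma homog_one k p x : homog k p x 1 = peval p x.
Proof.
induction p as [|mo p IH]; unfold homog, peval in *; simpl. reflexivity.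
rewrite IH. rewrite pow1. ring.
Qed.

Lemma homog_div k p z y : syn_deg_le p k -> y <> 0 ->
  homog k p z y = y ^ k * peval p (fun i => z i * / y).
Proof.
induction p as [|mo p IH]; intros Hs Hy; unfold homog, peval in *; simpl. ring.
rewrite IH by (auto; intros mo' H'; apply Hs; right; auto).
rewrite mono_eval_scale.
assert (Hk : (mdeg (snd mo) <= k)%nat) by (apply Hs; left; auto).
assert (Ek : y ^ k = y ^ (k - mdeg (snd mo)) * y ^ mdeg (snd mo)).
{ rewrite <- pow_add. f_equal. lia. }
rewrite Ek.
rewrite pow_inv.
assert (y ^ mdeg (snd mo) <> 0) by (apply pow_nonzero; exact Hy).
field. exact H.
Qed.

Lemma peval_app q1 q2 x : peval (q1 ++ q2) x = peval q1 x + peval q2 x.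
Proof.
induction q1 as [|mo q1 IH]; unfold peval in *; simpl. ring. rewrite IH. ring.
Qed.

Lemma is_form_ext n k f g : (forall z, f z = g z) -> is_form n k f -> is_form n k g.
Proof.
intros H [q [H1 [H2 H3]]]. exists q. repeat split; auto. intros x. rewrite <- H. auto.
Qed.

Lemma is_form_add n k f g : is_form n k f -> is_form n k g -> is_form n k (fun z => f z + g z).
Proof.
intros [q1 [A1 [B1 C1]]] [q2 [A2 [B2 C2]]]. exists (q1 ++ q2). repeat split.
- intros mo H. apply in_app_or in H. destruct H; auto.
- intros mo H. apply in_app_or in H. destruct H; auto.
- intros x. rewrite peval_app, C1, C2. reflexivity.
Qed.

Definition pscale (c : R) (q : mpoly) : mpoly := map (fun mo => (c * fst mo, snd mo)) q.

Lemma peval_pscale c q x : peval (pscale c q) x = c * peval q x.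
Proof.
induction q as [|mo q IH]; unfold peval, pscale in *; simpl. ring. rewrite IH. simpl. ring.
Qed.

Lemma is_form_scale n k c f : is_form n k f -> is_form n k (fun z => c * f z).
Proof.
intros [q [A [B C]]]. exists (pscale c q). repeat split.
- intros mo H. unfold pscale in H. apply in_map_iff in H. destruct H as [mo' [<- H]]. simpl. auto.
- intros mo H. unfold pscale in H. apply in_map_iff in H. destruct H as [mo' [<- H]]. simpl. auto.
- intros x. rewrite peval_pscale, C. reflexivity.
Qed.

Lemma is_form_sub n k f g : is_form n k f -> is_form n k g -> is_form n k (fun z => f z - g z).
Proof.
intros Hf Hg. apply (is_form_ext n k (fun z => f z + (-1) * g z)).
intros; ring. apply is_form_add; auto. apply is_form_scale; auto.
Qed.

Lemma is_form_zero n k : is_form n k (fun _ => 0).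
Proof. exists nil. split; [intros mo []| split; [intros mo []| intros; reflexivity]]. Qed.

Lemma is_form_one n : is_form n 0 (fun _ => 1).
Proof.
exists ((1, nil) :: nil). repeat split.
- intros mo [<-|[]]. simpl. lia.
- intros mo [<-|[]]. reflexivity.
- intros x. unfold peval. simpl. ring.
Qed.

Fixpoint eadd (a b : list nat) : list nat :=
  match a, b with
  | nil, _ => b
  | _, nil => a
  | x :: a', y :: b' => (x + y)%nat :: eadd a' b'
  end.

Lemma eadd_eval a : forall b x, mono_eval (eadd a b) x = mono_eval a x * mono_eval b x.
Proof.
induction a as [|i a IH]; intros b x; simpl. ring.
destruct b as [|j b]; simpl. ring.
rewrite IH, pow_add. ring.
Qed.

Lemma eadd_deg a : forall b, mdeg (eadd a b) = (mdeg a + mdeg b)%nat.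
Proof.
induction a as [|i a IH]; intros b; simpl. reflexivity.
destruct b as [|j b]; simpl. lia. rewrite IH. lia.
Qed.

Lemma eadd_len a : forall b, length (eadd a b) = Nat.max (length a) (length b).
Proof.
induction a as [|i a IH]; intros b; simpl. reflexivity.
destruct b as [|j b]; simpl. lia. rewrite IH. lia.
Qed.

Definition pmul (q1 q2 : mpoly) : mpoly :=
  flat_map (fun a => map (fun b => (fst a * fst b, eadd (snd a) (snd b))) q2) q1.

Lemma peval_pmul_aux a q2 x :
  peval (map (fun b => (fst a * fst b, eadd (snd a) (snd b))) q2) x =
  fst a * mono_eval (snd a) x * peval q2 x.
Proof.
induction q2 as [|b q2 IH]; unfold peval in *; simpl. ring.
rewrite IH, eadd_eval. ring.
Qed.

Lemma peval_pmul q1 q2 x : peval (pmul q1 q2) x = peval q1 x * peval q2 x.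
Proof.
induction q1 as [|a q1 IH]; unfold pmul in *; simpl. unfold peval; simpl; ring.
rewrite peval_app, IH, peval_pmul_aux. unfold peval at 3. simpl. fold (peval q1 x). fold (peval q2 x). ring.
Qed.

Lemma is_form_mul n k1 k2 k f g : (k = k1 + k2)%nat -> is_form n k1 f -> is_form n k2 g ->
  is_form n k (fun z => f z * g z).
Proof.
intros Hk [q1 [A1 [B1 C1]]] [q2 [A2 [B2 C2]]]. exists (pmul q1 q2). repeat split.
- intros mo H. unfold pmul in H. apply in_flat_map in H. destruct H as [a [Ha H]].
  apply in_map_iff in H. destruct H as [b [<- Hb]]. simpl. rewrite eadd_len.
  specialize (A1 a Ha). specialize (A2 b Hb). lia.
- intros mo H. unfold pmul in H. apply in_flat_map in H. destruct H as [a [Ha H]].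
  apply in_map_iff in H. destruct H as [b [<- Hb]]. simpl. rewrite eadd_deg.
  rewrite (B1 a Ha), (B2 b Hb). lia.
- intros x. rewrite peval_pmul, C1, C2. reflexivity.
Qed.

Lemma is_form_pow n k f j k' : (k' = j * k)%nat -> is_form n k f -> is_form n k' (fun z => f z ^ j).
Proof.
intros Hk Hf. subst k'. induction j as [|j IH]; simpl.
- apply is_form_one.
- apply (is_form_mul n k (j * k)); auto.
Qed.

Lemma mono_var i : forall x, mono_eval (repeat 0%nat i ++ 1%nat :: nil) x = x i.
Proof.
induction i as [|i IH]; intros x; simpl. ring. rewrite IH. ring.
Qed.

Lemma mdeg_var i : mdeg (repeat 0%nat i ++ 1%nat :: nil) = 1%nat.
Proof. induction i as [|i IH]; simpl; auto. Qed.

Lemma is_form_var n i : (i < n)%nat -> is_form n 1 (fun z => z i).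
Proof.
intros Hi. exists ((1, repeat 0%nat i ++ 1%nat :: nil) :: nil). repeat split.
- intros mo [<-|[]]. simpl. rewrite length_app, repeat_length. simpl. lia.
- intros mo [<-|[]]. apply mdeg_var.
- intros x. unfold peval. simpl. rewrite mono_var. ring.
Qed.

Lemma is_form_mono n e : (length e <= n)%nat -> is_form n (mdeg e) (fun z => mono_eval e z).
Proof.
intros H. exists ((1, e) :: nil). repeat split.
- intros mo [<-|[]]. simpl. lia.
- intros mo [<-|[]]. reflexivity.
- intros x. unfold peval. simpl. ring.
Qed.

Lemma is_form_sum n k m F : (forall i, (i < m)%nat -> is_form n k (F i)) ->
  is_form n k (fun z => sumR m (fun i => F i z)).
Proof.
induction m as [|m IH]; intros H; simpl.
- apply is_form_zero.
- apply is_form_add. apply IH; intros; apply H; lia. apply H; lia.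
Qed.

Lemma is_form_homog N k p j : syn_deg_le p k -> vars_le p N -> (j < N)%nat ->
  is_form N k (fun z => homog k p z (z j)).
Proof.
intros Hs Hv Hj. induction p as [|mo p IH]; unfold homog in *; simpl.
- apply is_form_zero.
- apply is_form_add.
  + apply (is_form_mul N (mdeg (snd mo)) (k - mdeg (snd mo))).
    * assert (mdeg (snd mo) <= k)%nat by (apply Hs; left; auto). lia.
    * apply (is_form_ext N _ (fun z => fst mo * mono_eval (snd mo) z)). intros; ring.
      apply is_form_scale. apply is_form_mono. apply Hv. left; auto.
    * apply (is_form_pow N 1). lia. apply is_form_var; auto.
  + apply IH. intros mo' H; apply Hs; right; auto. intros mo' H; apply Hv; right; auto.
Qed.

Lemma vars_le_mono q n n' : vars_le q n -> (n <= n')%nat -> vars_le q n'.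
Proof. intros H Hn mo Hmo. specialize (H mo Hmo). lia. Qed.

Lemma f_form n m d p g Rb eta beta gamma : (1 <= d)%nat -> syn_deg_le p (2*d) -> vars_le p n ->
  (forall i, (1 <= i <= m)%nat -> vars_le (g i) n) ->
  (forall i, (1 <= i <= m)%nat -> syn_deg_le (g i) (2*d)) ->
  is_form (n+m+3) (2*(2*d)) (f_gamma n m d p g Rb eta beta gamma).
Proof.
intros Hd Hsp Hvp Hvg Hsg.
assert (Hy : is_form (n+m+3) 1 (fun z => z (n+m+2)%nat)) by (apply is_form_var; lia).
unfold f_gamma. cbv beta zeta.
apply is_form_add; [apply is_form_add|].
- apply (is_form_pow _ (2*d)). lia.
  apply is_form_sub; [apply is_form_sub|].
  + apply is_form_scale. apply (is_form_pow _ 1). lia. exact Hy.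
  + apply is_form_homog; auto. apply (vars_le_mono _ n); auto; lia. lia.
  + apply (is_form_mul _ 2 (2*d-2)). lia.
    apply (is_form_pow _ 1). lia. apply is_form_var; lia.
    apply (is_form_pow _ 1). lia. exact Hy.
- apply is_form_sum. intros i Hi.
  apply (is_form_pow _ (2*d)). lia.
  apply is_form_sub.
  + apply is_form_homog; auto. apply Hsg; lia. apply (vars_le_mono _ n); auto. apply Hvg; lia. lia. lia.
  + apply (is_form_mul _ 2 (2*d-2)). lia.
    apply (is_form_pow _ 1). lia. apply is_form_var; lia.
    apply (is_form_pow _ 1). lia. exact Hy.
- apply (is_form_pow _ (2*d)). lia.
  apply is_form_sub; [apply is_form_sub|].
  + apply is_form_scale. apply (is_form_pow _ 1). lia. exact Hy.
  + apply (is_form_pow _ 2). lia. apply is_form_add.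
    * apply is_form_sum. intros i Hi. apply (is_form_pow _ 1). lia. apply is_form_var; lia.
    * apply is_form_sum. intros i Hi. apply (is_form_pow _ 1). lia. apply is_form_var; lia.
  + apply (is_form_pow _ 1). lia. apply is_form_var; lia.
Qed.

Lemma sumR_scale n f c : sumR n (fun j => f j * c) = sumR n f * c.
Proof. induction n; simpl. ring. rewrite IHn. ring. Qed.

Lemma sph_nonzero N z : sumR N (fun i => z i ^ 2) = 1 -> exists i, (i < N)%nat /\ z i <> 0.
Proof.
intros H. apply NNPP. intros Hn.
assert (sumR N (fun i => z i ^ 2) = sumR N (fun _ => 0)).
{ apply sumR_ext. intros i Hi. destruct (Req_dec (z i) 0) as [E|E].
  rewrite E; ring. exfalso; apply Hn; exists i; auto. }
assert (sumR N (fun _ => 0) = 0). { clear. induction N; simpl; auto. rewrite IHN; ring. }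
lra.
Qed.

Lemma eps_lemma N k F G : (1 <= N)%nat -> is_form N k F -> is_form N k G -> pos_def N F ->
  exists eps, 0 < eps /\ pos_def N (fun z => F z - eps * G z).
Proof.
intros HN [qF [AF [BF CF]]] [qG [AG [BG CG]]] HP.
destruct (Cpt.sphere_min N qF) as [z0 [S0 [Z0 M0]]]. lia.
destruct (Cpt.sphere_max N qG) as [z1 [S1 [Z1 M1]]]. lia.
set (c := peval qF z0). set (M := peval qG z1).
assert (Hc : 0 < c). { unfold c. rewrite <- CF. apply HP. apply sph_nonzero; auto. }
assert (HM : 0 < Rabs M + 1) by (pose proof (Rabs_pos M); lra).
exists (c / (Rabs M + 1)). split. apply Rdiv_lt_0_compat; auto.
intros z [i [Hi Hz]].
set (S := sumR N (fun j => z j ^ 2)).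
assert (HS : 0 < S).
{ apply Rlt_le_trans with (z i ^ 2).
  - assert (z i * z i > 0) by (apply Rsqr_pos_lt in Hz; unfold Rsqr in Hz; lra). simpl; lra.
  - apply (sumR_ge_term N (fun j => z j ^ 2) i); auto. intros j _. apply pow2_ge_0. }
set (t := / sqrt S).
assert (Ht : 0 < t) by (apply Rinv_0_lt_compat; apply sqrt_lt_R0; auto).
assert (Ht2 : t ^ 2 * S = 1).
{ unfold t. rewrite pow_inv. simpl. rewrite Rmult_1_r. rewrite sqrt_sqrt by lra. field. lra. }
set (w := fun j => if Nat.ltb j N then z j * t else 0).
assert (Sw : sumR N (fun j => w j ^ 2) = 1).
{ rewrite (sumR_ext N _ (fun j => z j ^ 2 * t ^ 2)).
  rewrite sumR_scale. fold S. lra.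
  intros j Hj. unfold w. rewrite (proj2 (Nat.ltb_lt j N) Hj). rewrite Rpow_mult_distr. reflexivity. }
assert (Zw : forall j, (N <= j)%nat -> w j = 0).
{ intros j Hj. unfold w. rewrite (proj2 (Nat.ltb_ge j N) Hj). reflexivity. }
assert (EF : peval qF w = t ^ k * F z).
{ rewrite (peval_ext_vars qF N w (fun j => z j * t)); auto.
  rewrite peval_scale with (k := k); auto. rewrite CF. reflexivity.
  intros j Hj. unfold w. rewrite (proj2 (Nat.ltb_lt j N) Hj). reflexivity. }
assert (EG : peval qG w = t ^ k * G z).
{ rewrite (peval_ext_vars qG N w (fun j => z j * t)); auto.
  rewrite peval_scale with (k := k); auto. rewrite CG. reflexivity.
  intros j Hj. unfold w. rewrite (proj2 (Nat.ltb_lt j N) Hj). reflexivity. }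
specialize (M0 w Sw Zw). specialize (M1 w Sw Zw).
fold c in M0. fold M in M1. rewrite EF in M0. rewrite EG in M1.
assert (Htk : 0 < t ^ k) by (apply pow_lt; auto).
set (eps := c / (Rabs M + 1)).
assert (He : 0 < eps) by (apply Rdiv_lt_0_compat; auto).
assert (HepsM : eps * Rabs M < c).
{ unfold eps. apply Rmult_lt_reg_r with (Rabs M + 1); auto. field_simplify; try lra. }
assert (HMa : M <= Rabs M) by apply Rle_abs.
assert (t ^ k * (F z - eps * G z) > 0).
{ assert (eps * (t ^ k * G z) <= eps * Rabs M) by (apply Rmult_le_compat_l; lra). nra. }
apply Rmult_lt_reg_l with (t ^ k); auto. lra.
Qed.

Lemma pow_zero_inv x k : x ^ k = 0 -> (0 < k)%nat -> x = 0.
Proof. intros H _. destruct (Req_dec x 0); auto. exfalso; apply (pow_nonzero x k); auto. Qed.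

Lemma pow_even_nonneg x d : 0 <= x ^ (2 * d).
Proof. rewrite pow_mult. apply pow_le. apply pow2_ge_0. Qed.

Lemma sq_sum_zero a b c : 0 <= b -> a ^ 2 + b + c ^ 2 <= 0 -> a = 0 /\ b = 0 /\ c = 0.
Proof.
intros Hb H. assert (0 <= a ^ 2) by apply pow2_ge_0. assert (0 <= c ^ 2) by apply pow2_ge_0.
assert (a ^ 2 = 0) by lra. assert (c ^ 2 = 0) by lra.
split; [|split]; try lra; eapply pow_zero_inv; eauto.
Qed.

Lemma f_posdef n m d p g Rb eta beta gamma : (1 <= d)%nat -> syn_deg_le p (2*d) ->
  (forall i, (1 <= i <= m)%nat -> syn_deg_le (g i) (2*d)) ->
  (forall x, inS m g x -> gamma < peval p x) ->
  pos_def (n+m+3) (f_gamma n m d p g Rb eta beta gamma).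
Proof.
intros Hd Hsp Hsg HS z [i0 [Hi0 Hz0]].
set (y := z (n+m+2)%nat).
set (T1 := gamma * y^(2*d) - homog (2*d) p z y - z (n+0)%nat ^2 * y^(2*d-2)).
set (G := fun i => homog (2*d) (g (S i)) z y - z (n + S i)%nat ^2 * y^(2*d-2)).
set (A := sumR n (fun i => z i ^2) + sumR (m+1) (fun j => z (n+j)%nat ^2)).
set (T3 := (Rb + sumR m (fun i => eta (S i)) + beta + gamma)^d * y^(2*d) - A^d
            - z (n + S m)%nat ^ (2*d)).
assert (Ef : f_gamma n m d p g Rb eta beta gamma z = T1^2 + sumR m (fun i => G i ^2) + T3^2)
  by reflexivity.
rewrite Ef.
assert (HG0 : 0 <= sumR m (fun i => G i ^ 2)) by (apply sumR_nonneg; intros; apply pow2_ge_0).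
apply Rnot_le_lt. intros Hle.
destruct (sq_sum_zero _ _ _ HG0 Hle) as [H1 [H2 H3]].
assert (HGi : forall i, (i < m)%nat -> G i = 0).
{ intros i Hi. apply (pow_zero_inv _ 2); [|lia].
  apply (sumR_zero m (fun i => G i ^ 2)); auto. intros; apply pow2_ge_0. }
destruct (Req_dec y 0) as [Hy|Hy].
-
  assert (HA : 0 <= A).
  { unfold A. assert (0 <= sumR n (fun i => z i ^ 2)) by (apply sumR_nonneg; intros; apply pow2_ge_0).
    assert (0 <= sumR (m+1) (fun j => z (n+j)%nat ^ 2)) by (apply sumR_nonneg; intros; apply pow2_ge_0).
    lra. }
  assert (E3 : A ^ d + z (n + S m)%nat ^ (2*d) = 0).
  { unfold T3 in H3. rewrite Hy in H3. rewrite pow_i in H3 by lia. lra. }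
  assert (0 <= A ^ d) by (apply pow_le; auto).
  pose proof (pow_even_nonneg (z (n + S m)%nat) d).
  assert (HA0 : A = 0) by (apply (pow_zero_inv _ d); [lra|lia]).
  assert (Hs0 : z (n + S m)%nat = 0) by (apply (pow_zero_inv _ (2*d)); [lra|lia]).
  assert (Hx0 : 0 <= sumR n (fun i => z i ^ 2)) by (apply sumR_nonneg; intros; apply pow2_ge_0).
  assert (Hs00 : 0 <= sumR (m+1) (fun j => z (n+j)%nat ^ 2)) by (apply sumR_nonneg; intros; apply pow2_ge_0).
  unfold A in HA0.
  assert (Hx : forall i, (i < n)%nat -> z i = 0).
  { intros i Hi. apply (pow_zero_inv _ 2); [|lia].
    apply (sumR_zero n (fun i => z i ^ 2)); auto. intros; apply pow2_ge_0. lra. }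
  assert (Hs : forall j, (j < m+1)%nat -> z (n+j)%nat = 0).
  { intros j Hj. apply (pow_zero_inv _ 2); [|lia].
    apply (sumR_zero (m+1) (fun j => z (n+j)%nat ^ 2)); auto. intros; apply pow2_ge_0. lra. }
  apply Hz0.
  destruct (Nat.lt_ge_cases i0 n) as [Hl|Hl]. apply Hx; auto.
  destruct (Nat.lt_ge_cases i0 (n+m+1)) as [Hl2|Hl2].
  { replace i0 with (n + (i0 - n))%nat by lia. apply Hs. lia. }
  destruct (Nat.eq_dec i0 (n+m+1)) as [->|Hne].
  { replace (n+m+1)%nat with (n + S m)%nat by lia. exact Hs0. }
  replace i0 with (n+m+2)%nat by lia. exact Hy.
-
  set (w := fun i => z i * / y).
  assert (Hy2 : 0 < y ^ 2).
  { assert (0 < Rsqr y) by (apply Rsqr_pos_lt; auto). unfold Rsqr in *. simpl. lra. }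
  assert (Ey : y ^ (2*d) = y ^ (2*d-2) * y ^ 2) by (rewrite <- pow_add; f_equal; lia).
  assert (HY : y ^ (2*d-2) <> 0) by (apply pow_nonzero; auto).
  assert (Hp : peval p w <= gamma).
  { unfold T1 in H1. rewrite (homog_div _ _ _ _ Hsp Hy) in H1. fold w in H1.
    rewrite Ey in H1.
    assert (E : y ^ (2*d-2) * (y ^ 2 * (gamma - peval p w) - z (n+0)%nat ^ 2) = 0) by (rewrite <- H1; ring).
    apply Rmult_integral in E. destruct E as [E|E]. contradiction.
    pose proof (pow2_ge_0 (z (n+0)%nat)).
    assert (0 <= y ^ 2 * (gamma - peval p w)) by lra.
    destruct (Rle_dec (peval p w) gamma); auto. exfalso. nra. }
  assert (Hin : inS m g w).
  { intros i [Hi1 Hi2].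
    assert (Gi := HGi (i - 1)%nat ltac:(lia)).
    replace (S (i - 1)) with i in Gi by lia. unfold G in Gi.
    replace (S (i - 1)) with i in Gi by lia.
    rewrite (homog_div _ _ _ _ (Hsg i (conj Hi1 Hi2)) Hy) in Gi. fold w in Gi.
    rewrite Ey in Gi.
    assert (E : y ^ (2*d-2) * (y ^ 2 * peval (g i) w - z (n+i)%nat ^ 2) = 0) by (rewrite <- Gi; ring).
    apply Rmult_integral in E. destruct E as [E|E]. contradiction.
    pose proof (pow2_ge_0 (z (n+i)%nat)).
    destruct (Rle_dec 0 (peval (g i) w)); auto. exfalso. nra. }
  specialize (HS w Hin). lra.
Qed.

Lemma sumR_shift m f : sumR (S m) f = f 0%nat + sumR m (fun i => f (S i)).
Proof. induction m; simpl in *. ring. rewrite IHm. ring. Qed.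

Lemma root_exists v d : 0 <= v -> (1 <= d)%nat -> exists t, t ^ (2 * d) = v.
Proof.
intros Hv Hd. destruct (Rlt_dec 0 v) as [Hp|Hn].
- set (r := Rpower v (/ INR d)).
  assert (Hr : 0 < r) by (unfold r, Rpower; apply exp_pos).
  exists (sqrt r). rewrite pow_mult.
  replace (sqrt r ^ 2) with r by (simpl; rewrite Rmult_1_r, sqrt_sqrt; lra).
  rewrite <- Rpower_pow by exact Hr. unfold r. rewrite Rpower_mult.
  rewrite Rinv_l. apply Rpower_1; auto. apply not_0_INR; lia.
- exists 0. rewrite pow_i by lia. lra.
Qed.

Lemma f_zero_point n m d p g Rb eta beta gamma x : (1 <= d)%nat -> vars_le p n ->
  (forall i, (1 <= i <= m)%nat -> vars_le (g i) n) ->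
  (forall x, inS m g x -> sumR n (fun i => x i ^ 2) <= Rb) ->
  (forall i, (1 <= i <= m)%nat -> forall x, inS m g x -> peval (g i) x <= eta i) ->
  (forall x, inS m g x -> - peval p x <= beta) ->
  inS m g x -> peval p x < gamma ->
  exists z, z (n+m+2)%nat = 1 /\ f_gamma n m d p g Rb eta beta gamma z = 0.
Proof.
intros Hd Hvp Hvg HR Heta Hbeta Hx Hpx.
set (u0 := gamma - peval p x).
set (A := sumR n (fun i => x i ^ 2) + (u0 + sumR m (fun i => peval (g (S i)) x))).
set (C := Rb + sumR m (fun i => eta (S i)) + beta + gamma).
assert (Hgx : forall i, (i < m)%nat -> 0 <= peval (g (S i)) x) by (intros; apply Hx; lia).
assert (HA0 : 0 <= A).
{ unfold A. assert (0 <= sumR n (fun i => x i ^ 2)) by (apply sumR_nonneg; intros; apply pow2_ge_0).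
  assert (0 <= sumR m (fun i => peval (g (S i)) x)) by (apply sumR_nonneg; auto). unfold u0. lra. }
assert (HAC : A <= C).
{ unfold A, C, u0. pose proof (HR x Hx). pose proof (Hbeta x Hx).
  assert (sumR m (fun i => peval (g (S i)) x) <= sumR m (fun i => eta (S i))).
  { apply sumR_le. intros i Hi. apply Heta; auto. lia. }
  lra. }
assert (Hv : 0 <= C ^ d - A ^ d) by (pose proof (pow_incr A C d (conj HA0 HAC)); lra).
destruct (root_exists _ d Hv Hd) as [t Ht].
set (z := fun i => if Nat.ltb i n then x i else if Nat.eqb i n then sqrt u0
                   else if Nat.ltb i (n+m+1) then sqrt (peval (g (i - n)%nat) x)
                   else if Nat.eqb i (n+m+1) then t else 1).
assert (Zx : forall i, (i < n)%nat -> z i = x i).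
{ intros i Hi. unfold z. destruct (Nat.ltb_spec i n); [reflexivity|lia]. }
assert (Z0 : z (n+0)%nat = sqrt u0).
{ unfold z. destruct (Nat.ltb_spec (n+0) n); [lia|]. destruct (Nat.eqb_spec (n+0) n); [reflexivity|lia]. }
assert (Zg : forall i, (i < m)%nat -> z (n + S i)%nat = sqrt (peval (g (S i)) x)).
{ intros i Hi. unfold z. destruct (Nat.ltb_spec (n + S i) n); [lia|].
  destruct (Nat.eqb_spec (n + S i) n); [lia|].
  destruct (Nat.ltb_spec (n + S i) (n+m+1)); [|lia].
  replace (n + S i - n)%nat with (S i) by lia. reflexivity. }
assert (Zt : z (n + S m)%nat = t).
{ unfold z. destruct (Nat.ltb_spec (n + S m) n); [lia|].
  destruct (Nat.eqb_spec (n + S m) n); [lia|].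
  destruct (Nat.ltb_spec (n + S m) (n+m+1)); [lia|].
  destruct (Nat.eqb_spec (n + S m) (n+m+1)); [reflexivity|lia]. }
assert (Zy : z (n+m+2)%nat = 1).
{ unfold z. destruct (Nat.ltb_spec (n+m+2) n); [lia|].
  destruct (Nat.eqb_spec (n+m+2) n); [lia|].
  destruct (Nat.ltb_spec (n+m+2) (n+m+1)); [lia|].
  destruct (Nat.eqb_spec (n+m+2) (n+m+1)); [lia|reflexivity]. }
assert (Hu0 : 0 <= u0) by (unfold u0; lra).
assert (Sq : forall a, 0 <= a -> sqrt a ^ 2 = a) by (intros; simpl; rewrite Rmult_1_r, sqrt_sqrt; lra).
exists z. split; auto.
set (y := z (n+m+2)%nat).
set (T1 := gamma * y^(2*d) - homog (2*d) p z y - z (n+0)%nat ^2 * y^(2*d-2)).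
set (G := fun i => homog (2*d) (g (S i)) z y - z (n + S i)%nat ^2 * y^(2*d-2)).
set (A' := sumR n (fun i => z i ^2) + sumR (m+1) (fun j => z (n+j)%nat ^2)).
set (T3 := (Rb + sumR m (fun i => eta (S i)) + beta + gamma)^d * y^(2*d) - A'^d
            - z (n + S m)%nat ^ (2*d)).
assert (Ef : f_gamma n m d p g Rb eta beta gamma z = T1^2 + sumR m (fun i => G i ^2) + T3^2)
  by reflexivity.
rewrite Ef.
assert (E1 : T1 = 0).
{ unfold T1, y. rewrite Zy, homog_one, Z0, Sq, !pow1 by auto.
  rewrite (peval_ext_vars p n z x Hvp Zx). unfold u0. ring. }
assert (E2 : sumR m (fun i => G i ^ 2) = sumR m (fun _ => 0)).
{ apply sumR_ext. intros i Hi. unfold G, y. rewrite Zy, homog_one, Zg, Sq, !pow1 by auto.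
  rewrite (peval_ext_vars (g (S i)) n z x); auto. ring. apply Hvg; lia. }
assert (E0 : sumR m (fun _ => 0) = 0) by (clear; induction m; simpl; auto; rewrite IHm; ring).
assert (EA : A' = A).
{ unfold A', A. rewrite (sumR_ext n (fun i => z i ^ 2) (fun i => x i ^ 2)).
  2:{ intros i Hi. rewrite Zx; auto. }
  replace (m+1)%nat with (S m) by lia. rewrite sumR_shift. rewrite Z0, Sq by auto.
  rewrite (sumR_ext m _ (fun i => peval (g (S i)) x)). reflexivity.
  intros i Hi. rewrite Zg, Sq; auto. }
assert (E3 : T3 = 0).
{ unfold T3, y. rewrite Zy, EA, Zt, Ht, pow1. fold C. ring. }
rewrite E1, E2, E0, E3. ring.
Qed.

Lemma K_up (K : nat -> nat -> nat -> ((nat -> R) -> R) -> Prop) N D q r k :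
  (forall r q, K r N D q -> K (S r) N D q) -> K r N D q -> (r <= k)%nat -> K k N D q.
Proof.
intros Hc Hr Hk. induction k as [|k IH].
- replace r with 0%nat in Hr by lia. exact Hr.
- destruct (Nat.eq_dec r (S k)) as [->|Hne]; auto. apply Hc. apply IH. lia.
Qed.

Lemma K_transfer (K : nat -> nat -> nat -> ((nat -> R) -> R) -> Prop) N D Sf F r r' k :
  (forall r q, K r N D q -> K (S r) N D q) ->
  (forall r q, K r N D q -> forall eps, 0 <= eps <= 1 -> K r N D (fun z => q z + eps * Sf z)) ->
  (1 <= r)%nat -> (r <= k)%nat -> (r' <= k)%nat ->
  K r' N D (fun z => F z - / INR r * Sf z) -> K k N D (fun z => F z - / INR k * Sf z).
Proof.
intros Hc Hd Hr Hrk Hr'k HK.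
assert (H1 : 1 <= INR r) by (replace 1 with (INR 1) by reflexivity; apply le_INR; lia).
assert (H2 : INR r <= INR k) by (apply le_INR; lia).
assert (Hi1 : / INR k <= / INR r) by (apply Rinv_le_contravar; lra).
assert (Hi2 : / INR r <= 1) by (rewrite <- Rinv_1; apply Rinv_le_contravar; lra).
assert (Hi3 : 0 < / INR k) by (apply Rinv_0_lt_compat; lra).
specialize (Hd _ _ HK (/ INR r - / INR k) ltac:(lra)).
replace (fun z => F z - / INR k * Sf z) with
  (fun z => F z - / INR r * Sf z + (/ INR r - / INR k) * Sf z).
2:{ apply functional_extensionality; intros; ring. }
apply (K_up K N D _ r'); auto.
Qed.

Theorem theorem2p2
  (n m d : nat) (p : mpoly) (g : nat -> mpoly) (Rb : R) (eta : nat -> R) (beta : R)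
  (K : nat -> nat -> nat -> ((nat -> R) -> R) -> Prop)
  (s : nat -> nat -> ((nat -> R) -> R))
  (pstar : ER) (l : nat -> ER) :
  (1 <= n)%nat ->
  vars_le p n -> (forall i, (1 <= i <= m)%nat -> vars_le (g i) n) ->
  (* d: 2d is the smallest even integer >= max degree of p, g_i, with d >= 1 *)
  (1 <= d)%nat ->
  syn_deg_le p (2 * d) -> (forall i, (1 <= i <= m)%nat -> syn_deg_le (g i) (2 * d)) ->
  (d = 1%nat \/ ~ (deg_le p (2 * d - 2) /\
                    forall i, (1 <= i <= m)%nat -> deg_le (g i) (2 * d - 2))) ->
  0 < Rb -> (forall x, inS m g x -> sumR n (fun i => x i ^ 2) <= Rb) ->
  (forall i, (1 <= i <= m)%nat -> forall x, inS m g x -> peval (g i) x <= eta i) ->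
  (forall x, inS m g x -> - peval p x <= beta) ->
  (* p* = inf_{x in S} p(x) *)
  ER_is_inf (fun v => exists x, inS m g x /\ v = peval p x) pstar ->
  (* (a) *)
  (forall n' d' r, (1 <= n')%nat -> (1 <= d')%nat -> forall q, K r n' d' q ->
      is_form n' (2 * d') q /\ nonneg_fun q) ->
  (forall n' d', (1 <= n')%nat -> (1 <= d')%nat ->
      K O n' d' (s n' d') /\ pos_def n' (s n' d')) ->
  (* (b) *)
  (forall n' d', (1 <= n')%nat -> (1 <= d')%nat -> forall q,
      is_form n' (2 * d') q -> pos_def n' q -> exists r, K r n' d' q) ->
  (* (c) *)
  (forall n' d' r, (1 <= n')%nat -> (1 <= d')%nat -> forall q,
      K r n' d' q -> K (S r) n' d' q) ->
  (* (d) *)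
  (forall n' d' r, (1 <= n')%nat -> (1 <= d')%nat -> forall q,
      K r n' d' q -> forall eps, 0 <= eps <= 1 ->
      K r n' d' (fun z => q z + eps * s n' d' z)) ->
  (* l_r = sup { gamma : f_gamma - (1/r) s_{N,2D} in K^r_{N,2D} }, N = n+m+3, D = 2d *)
  (forall r, (1 <= r)%nat ->
      ER_is_sup (fun gamma => K r (n + m + 3)%nat (2 * d)%nat
                   (fun z => f_gamma n m d p g Rb eta beta gamma z
                             - / INR r * s (n + m + 3)%nat (2 * d)%nat z)) (l r)) ->
  (forall r, (1 <= r)%nat -> ERle (l r) pstar) /\
  (forall r, (1 <= r)%nat -> ERle (l r) (l (S r))) /\
  ER_limit l pstar.
Proof.
intros Hn Hvp Hvg Hd Hsp Hsg Hmin HRb HR Heta Hbeta Hinf Ha Hs Hb Hc Hd' Hl.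
assert (HN : (1 <= n + m + 3)%nat) by lia. assert (HD : (1 <= 2 * d)%nat) by lia.
assert (Hc' : forall r q, K r (n+m+3)%nat (2*d)%nat q -> K (S r) (n+m+3)%nat (2*d)%nat q)
  by (intros; apply Hc; auto).
assert (Hd'' : forall r q, K r (n+m+3)%nat (2*d)%nat q -> forall eps, 0 <= eps <= 1 ->
   K r (n+m+3)%nat (2*d)%nat (fun z => q z + eps * s (n+m+3)%nat (2*d)%nat z))
  by (intros; apply Hd'; auto).
destruct (Hs _ _ HN HD) as [Hs0 Hspd].
assert (Hsform : is_form (n+m+3) (2*(2*d)) (s (n+m+3)%nat (2*d)%nat)) by (apply (Ha _ _ 0%nat HN HD); auto).
assert (P1 : forall r gamma, (1 <= r)%nat ->
   K r (n + m + 3)%nat (2 * d)%nat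
     (fun z => f_gamma n m d p g Rb eta beta gamma z - / INR r * s (n + m + 3)%nat (2 * d)%nat z) ->
   forall x, inS m g x -> gamma <= peval p x).
{ intros r gamma Hr HK x Hx. destruct (Rle_dec gamma (peval p x)) as [|Hlt]; auto. exfalso.
  destruct (f_zero_point n m d p g Rb eta beta gamma x) as [z [Zy Zf]]; auto. lra.
  destruct (Ha _ _ _ HN HD _ HK) as [_ Hnn]. specialize (Hnn z). cbv beta in Hnn.
  rewrite Zf in Hnn.
  assert (0 < s (n+m+3)%nat (2*d)%nat z) by (apply Hspd; exists (n+m+2)%nat; split; [lia| rewrite Zy; lra]).
  assert (0 < / INR r) by (apply Rinv_0_lt_compat; apply lt_0_INR; lia).
  assert (0 < / INR r * s (n+m+3)%nat (2*d)%nat z) by (apply Rmult_lt_0_compat; auto). lra. }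
assert (P3 : forall gamma, (forall x, inS m g x -> gamma < peval p x) ->
   exists R0, forall k, (R0 <= k)%nat -> ERle (ERfin gamma) (l k)).
{ intros gamma Hg.
  assert (Hpd := f_posdef n m d p g Rb eta beta gamma Hd Hsp Hsg Hg).
  assert (Hf := f_form n m d p g Rb eta beta gamma Hd Hsp Hvp Hvg Hsg).
  destruct (eps_lemma _ _ _ _ HN Hf Hsform Hpd) as [eps [Heps Hpe]].
  destruct (archimed_cor1 eps Heps) as [r1 [Hr1 Hr1']].
  assert (Hpd1 : pos_def (n+m+3) (fun z => f_gamma n m d p g Rb eta beta gamma z
                       - / INR r1 * s (n+m+3)%nat (2*d)%nat z)).
  { intros z Hz. specialize (Hpe z Hz). specialize (Hspd z Hz). cbv beta in Hpe.
    assert (/ INR r1 * s (n+m+3)%nat (2*d)%nat z <= eps * s (n+m+3)%nat (2*d)%nat z) by (apply Rmult_le_compat_r; lra). lra. }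
  assert (Hf1 : is_form (n+m+3) (2*(2*d)) (fun z => f_gamma n m d p g Rb eta beta gamma z
                       - / INR r1 * s (n+m+3)%nat (2*d)%nat z)).
  { apply is_form_sub; auto. apply is_form_scale; auto. }
  destruct (Hb _ _ HN HD _ Hf1 Hpd1) as [r2 Hr2].
  exists (Nat.max r1 r2). intros k Hk.
  assert (Hk1 : (1 <= k)%nat) by lia.
  destruct (Hl k Hk1) as [Hsup _]. apply Hsup.
  apply (K_transfer K _ _ _ _ r1 r2 k); auto; lia. }
assert (Ub : forall r, (1 <= r)%nat -> ERle (l r) pstar).
{ intros r Hr. destruct (Hl r Hr) as [_ Hsup]. apply Hsup. intros gamma Hg.
  destruct Hinf as [_ Hinf2]. apply Hinf2. intros v [x [Hx ->]]. simpl.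
  apply (P1 r gamma Hr Hg x Hx). }
split; [exact Ub|split].
- intros r Hr. destruct (Hl r Hr) as [_ Hsup]. apply Hsup. intros gamma Hg.
  destruct (Hl (S r) ltac:(lia)) as [Hsup1 _]. apply Hsup1.
  apply (K_transfer K _ _ _ _ r r (S r)); auto; lia.
- destruct Hinf as [Hinf1 Hinf2]. destruct pstar as [a| |].
  + intros eps Heps.
    destruct (P3 (a - eps / 2)) as [R0 HR0].
    { intros x Hx. specialize (Hinf1 (peval p x) (ex_intro _ x (conj Hx eq_refl))). simpl in Hinf1. lra. }
    exists (Nat.max R0 1). intros k Hk.
    specialize (HR0 k ltac:(lia)). specialize (Ub k ltac:(lia)).
    destruct (l k) as [v| |]; simpl in *; try contradiction.
    exists v. split; auto. apply Rabs_def1; lra.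
  + intros M. destruct (P3 M) as [R0 HR0].
    { intros x Hx. specialize (Hinf1 (peval p x) (ex_intro _ x (conj Hx eq_refl))). simpl in Hinf1. contradiction. }
    exists R0. exact HR0.
  + exfalso. assert (H := Hinf2 (ERfin (- beta))).
    simpl in H. apply H. intros v [x [Hx ->]]. simpl. specialize (Hbeta x Hx). lra.
Qed.
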